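(* For every $-1<\theta<1$ and positive integer $k$, there exists $h>0$ such that for every $d'\ge0$ there is a probability distribution $P_F^{d'}$ over functions $F:\{0,1\}^{L_{d'}}\to\{0,1,?\}$ with the following properties: (1) every function in the support of $P_F^{d'}$ can be computed by a circuit of depth at most $hd'$ with NOT gates and fan-in-two AND/OR gates; (2) for every $x\in\{0,1\}^{L_{d'}}$, if $F\sim P_F^{d'}$ then $\mathbb{P}[F(x)\in\{0,1\}]\ge 1-1/(2k)$; (3) for every $x\in\{0,1\}^{L_{d'}}$, $\mathbb{P}[F(x)=1\mid F(x)\in\{0,1\}]=\mathbb{P}[X^{(0)}=1\mid X^{(d')}=x]$.
   Context: Broadcast (Ising) tree model: complete $k$-ary tree of depth $d'$ with root $\rho$; $L_r$ = vertices at depth $r$; $\sigma_\rho$ uniform on $\{0,1\}$; each child $v$ of $u$ independently has $\sigma_v=\sigma_u$ with probability $(1+\theta)/2$ and $1-\sigma_u$ otherwise; $X^{(r)}=(\sigma_v)_{v\in L_r}$. The three output values $0,1,?$ are encoded in binary. *)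

(* Defs.v *)
From HB Require Import structures.
From mathcomp Require Import all_boot all_order all_algebra.
From mathcomp Require Import reals.
Set Implicit Arguments. Unset Strict Implicit. Unset Printing Implicit Defensive.
Import Order.TTheory GRing.Theory Num.Theory.
Local Open Scope ring_scope.

(* Vertices of the complete k-ary tree of depth d: pairs (r, i) with
   r <= d the depth and i < k^r the index of the vertex at depth r.
   The root is (0,0); the children of (r, i) are (r+1, i*k + j), j < k. *)
Definition tvert (k d : nat) :=
  {p : 'I_d.+1 * 'I_(k ^ d) | (p.2 < k ^ p.1)%N}.

Definition tdepth k d (v : tvert k d) : nat := (val v).1.
Definition tindex k d (v : tvert k d) : nat := (val v).2.

Definition is_child k d (u v : tvert k d) : bool :=
  (tdepth v == (tdepth u).+1) && (tindex v %/ k == tindex u)%N.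

(* probability of a full labeling sigma of the tree:
   root uniform, each edge keeps the label w.p. (1+theta)/2 *)
Definition edge_w (R : realType) (theta : R) (a b : bool) : R :=
  if a == b then (1 + theta) / 2 else (1 - theta) / 2.

Definition label_prob (R : realType) (theta : R) (k d : nat)
    (sigma : {ffun tvert k d -> bool}) : R :=
  (1 / 2) * \prod_(u : tvert k d) \prod_(v : tvert k d | is_child u v)
              edge_w theta (sigma u) (sigma v).

Definition leaves_are k d (sigma : {ffun tvert k d -> bool})
    (x : {ffun 'I_(k ^ d) -> bool}) : bool :=
  [forall v : tvert k d, (tdepth v == d) ==> (sigma v == x (val v).2)].

Definition root_is k d (sigma : {ffun tvert k d -> bool}) (b : bool) : bool :=
  [forall v : tvert k d, (tdepth v == 0%N) ==> (sigma v == b)].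

Definition prob_leaves (R : realType) (theta : R) k d
    (x : {ffun 'I_(k ^ d) -> bool}) : R :=
  \sum_(sigma | leaves_are sigma x) label_prob theta sigma.

Definition prob_root1_leaves (R : realType) (theta : R) k d
    (x : {ffun 'I_(k ^ d) -> bool}) : R :=
  \sum_(sigma | root_is sigma true && leaves_are sigma x) label_prob theta sigma.

Definition cond_root1 (R : realType) (theta : R) k d
    (x : {ffun 'I_(k ^ d) -> bool}) : R :=
  prob_root1_leaves theta x / prob_leaves theta x.

Inductive circuit (n : nat) : Type :=
| CInp : 'I_n -> circuit n
| CNot : circuit n -> circuit n
| CAnd : circuit n -> circuit n -> circuit n
| COr  : circuit n -> circuit n -> circuit n.

Fixpoint ceval n (c : circuit n) (x : {ffun 'I_n -> bool}) : bool :=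
  match c with
  | CInp i => x i
  | CNot c1 => ~~ ceval c1 x
  | CAnd c1 c2 => ceval c1 x && ceval c2 x
  | COr c1 c2 => ceval c1 x || ceval c2 x
  end.

Fixpoint cdepth n (c : circuit n) : nat :=
  match c with
  | CInp _ => 0
  | CNot c1 => (cdepth c1).+1
  | CAnd c1 c2 => (maxn (cdepth c1) (cdepth c2)).+1
  | COr c1 c2 => (maxn (cdepth c1) (cdepth c2)).+1
  end.

(* Binary encoding of {0,1,?} by two output bits:
   00 = 0, 11 = 1, 01 and 10 = ?.  (None stands for ?.) *)
Definition decode3 (b1 b2 : bool) : option bool :=
  if b1 == b2 then Some b1 else None.

Definition computable_depth n (F : {ffun {ffun 'I_n -> bool} -> option bool})
    (D : nat) : Prop :=
  exists c1 c2 : circuit n,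
    [/\ (cdepth c1 <= D)%N, (cdepth c2 <= D)%N &
        forall x, F x = decode3 (ceval c1 x) (ceval c2 x)].

Definition is_distr (R : realType) (T : finType) (P : {ffun T -> R}) : Prop :=
  (forall t, 0 <= P t) /\ \sum_(t : T) P t = 1.

(* Main.v *)
Require Import Defs.
From HB Require Import structures.
From mathcomp Require Import all_boot all_order all_algebra.
From mathcomp Require Import reals.
From mathcomp Require Import ring lra zify.
Import Order.TTheory GRing.Theory Num.Theory.
Local Open Scope ring_scope.
Set Implicit Arguments. Unset Strict Implicit. Unset Printing Implicit Defensive.

Lemma sum_optb (R : realType) (f : option bool -> R) :
  \sum_(a : option bool) f a = f None + f (Some true) + f (Some false).
Proof.
rewrite (bigD1 None) //= (bigD1 (Some true)) //= (bigD1 (Some false)) //= big1 ?addr0 ?addrA //.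
by case=> [[]|].
Qed.

Lemma prod_forall (R : realType) (T : finType) (P b : pred T) :
  (\prod_(v | P v) (b v)%:R : R) = ([forall v, P v ==> b v])%:R.
Proof.
case: forallP => H.
  by rewrite big1 // => v Pv; move: (H v); rewrite Pv /= => ->.
have [v Hv] : exists v, ~~ (P v ==> b v).
  apply/existsP; rewrite -negb_forall; exact/forallP.
move: Hv; rewrite negb_imply => /andP [Pv nb].
by rewrite (bigD1 v) //= (negbTE nb) mul0r.
Qed.

Definition mergeP (T : finType) (P : pred T) (s t : {ffun T -> bool}) : {ffun T -> bool} :=
  [ffun v => if P v then t v else s v].

Lemma sum_merge (R : realType) (T : finType) (P : pred T) (F : {ffun T -> bool} -> R) :
  \sum_s \sum_t F (mergeP P s t) = #|{ffun T -> bool}|%:R * \sum_s F s.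
Proof.
pose phi (p : {ffun T -> bool} * {ffun T -> bool}) := (mergeP P p.1 p.2, mergeP P p.2 p.1).
have phiK : involutive phi.
  by move=> [s t]; rewrite /phi /=; congr pair; apply/ffunP => v; rewrite !ffunE; case: (P v).
rewrite pair_bigA /= (reindex_inj (inv_inj phiK)) /=.
rewrite (eq_bigr (fun p => F p.1)); last first.
  by move=> [s t] _ /=; congr F; apply/ffunP=> v; rewrite !ffunE; case: (P v).
rewrite -(pair_bigA _ (fun s (t : {ffun T -> bool}) => F s)) /=.
rewrite mulr_sumr; apply: eq_bigr => s _; rewrite sumr_const mulr_natl.
by rewrite cardT.
Qed.

Lemma ring_help (R : realType) (a b c e f g h : R) :
  a * c = 1 -> (a * b) * (e * f * g * (c * h)) = (e * f * h) * (g * b).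
Proof. by move=> H; rewrite -[RHS]mul1r -H; ring. Qed.

Section Tree.
Variables (R : realType) (theta : R) (k d : nat).
Hypothesis kpos : (0 < k)%N.
Local Notation V := (tvert k d).
Local Notation w := (edge_w theta).

Lemma dep_le (v : V) : (tdepth v <= d)%N.
Proof. by rewrite /tdepth -ltnS ltn_ord. Qed.

Lemma idx_lt (v : V) : (tindex v < k ^ tdepth v)%N.
Proof. exact: (valP v). Qed.

Lemma child_dep (u v : V) : is_child u v -> tdepth v = (tdepth u).+1.
Proof. by case/andP => /eqP. Qed.

Lemma tvert_eq (u v : V) : tdepth u = tdepth v -> tindex u = tindex v -> u = v.
Proof.
move: u v => [[a b] Hu] [[a' b'] Hv] /= H1 H2; apply/val_inj => /=.
by rewrite /tdepth /tindex /= in H1 H2; congr pair; apply/val_inj.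
Qed.

Lemma parent_uniq (u u' v : V) : is_child u v -> is_child u' v -> u = u'.
Proof.
move=> /andP [/eqP H1 /eqP H2] /andP [/eqP H3 /eqP H4].
apply: tvert_eq; first by move: H1; rewrite H3 => -[].
by rewrite -H2 -H4.
Qed.

Lemma parent_ex (v : V) : (0 < tdepth v)%N -> exists u : V, is_child u v.
Proof.
move=> dpos.
have H1 : ((tdepth v).-1 < d.+1)%N by have := dep_le v; lia.
have H2 : (tindex v %/ k < k ^ d)%N.
  rewrite ltn_divLR //; apply: (leq_trans (ltn_ord (val v).2)).
  by rewrite leq_pmulr.
have H3 : (tindex v %/ k < k ^ (Ordinal H1))%N.
  rewrite ltn_divLR //= -expnSr prednK //; exact: idx_lt.
exists (exist _ (Ordinal H1, Ordinal H2) H3).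
by rewrite /is_child /tdepth /tindex /= prednK // !eqxx.
Qed.

Lemma child_ex (v : V) : (tdepth v < d)%N -> exists u : V, is_child v u.
Proof.
move=> dlt.
have H1 : ((tdepth v).+1 < d.+1)%N by [].
have H2 : (tindex v * k < k ^ d)%N.
  apply: (@leq_trans (k ^ (tdepth v).+1)); last by rewrite leq_pexp2l.
  by rewrite expnSr ltn_pmul2r //; exact: idx_lt.
have H3 : (tindex v * k < k ^ (Ordinal H1))%N.
  by rewrite /= expnSr ltn_pmul2r //; exact: idx_lt.
exists (exist _ (Ordinal H1, Ordinal H2) H3).
by rewrite /is_child /tdepth /tindex /= mulnK // !eqxx.
Qed.

Lemma card_children (v : V) : (#|[pred u | is_child v u]| <= k)%N.
Proof.
have := @leq_card_in _ _ (fun u : V => (Ordinal (ltn_pmod (tindex u) kpos))) [pred u | is_child v u].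
rewrite card_ord; apply => u1 u2; rewrite !inE => /andP[/eqP a1 /eqP b1] /andP [/eqP a2 /eqP b2] [] m.
apply: tvert_eq; first by rewrite a1 a2.
by rewrite (divn_eq (tindex u1) k) (divn_eq (tindex u2) k) b1 b2 m.
Qed.

Hypothesis kdpos : (0 < k ^ d)%N.
Definition rootv : V := exist _ (ord0, Ordinal kdpos) (isT : (0 < k ^ 0)%N).

Lemma root_uniq (v : V) : (tdepth v == 0%N) = (v == rootv).
Proof.
apply/eqP/eqP => [H|->//].
apply: tvert_eq => //; have := idx_lt v; rewrite H expn0 /tindex /=; lia.
Qed.

Variable x : {ffun 'I_(k ^ d) -> bool}.

Fixpoint Lfix (n : nat) (v : V) (b : bool) : R :=
  match n with
  | 0 => (b == x (val v).2)%:R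
  | n.+1 => \prod_(u | is_child v u) \sum_(c : bool) w b c * Lfix n u c
  end.
Definition Lv v b := Lfix (d - tdepth v) v b.

Lemma Lv_rec (v : V) b : (tdepth v < d)%N ->
  Lv v b = \prod_(u | is_child v u) \sum_(c : bool) w b c * Lv u c.
Proof.
move=> lt; rewrite /Lv; have -> : (d - tdepth v = (d - (tdepth v).+1).+1)%N by lia.
by apply: eq_bigr => u /child_dep ->.
Qed.

Definition Qt (r : nat) (b : bool) (s : {ffun V -> bool}) : R :=
  (\prod_(v : V | tdepth v == 0%N) (s v == b)%:R) *
  (\prod_(u : V) \prod_(v : V | is_child u v && (tdepth v <= r)%N) w (s u) (s v)) *
  (\prod_(u : V | tdepth u == r) Lv u (s u)) *
  (\prod_(v : V | (r < tdepth v)%N) (1/2 : R)).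
Definition Q r b := \sum_s Qt r b s.

Lemma Q0 b : Q 0 b = Lv rootv b.
Proof.
rewrite /Q.
pose h := fun (v : V) (c : bool) => if tdepth v == 0%N then (c == b)%:R * Lv v c else (1/2 : R).
have E : forall s : {ffun V -> bool}, Qt 0 b s = \prod_v h v (s v).
  move=> s; rewrite /Qt.
  rewrite [X in _ * X * _ * _]big1 ?mulr1; last first.
    by move=> u _; apply: big1 => v /andP [/child_dep -> ].
  rewrite [RHS](bigID (fun v => tdepth v == 0%N)) /=.
  rewrite -big_split /=. congr (_ * _).
    by apply: eq_bigr => v; rewrite /h => ->.
  apply: eq_big => [v|v]; first by rewrite lt0n.
  by rewrite /h lt0n => /negbTE ->.
rewrite (eq_bigr _ (fun s _ => E s)) -(@bigA_distr_bigA _ _ _ _ _ _ _ h) /=.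
rewrite (bigD1 rootv) //= [X in _ * X]big1 ?mulr1; last first.
  move=> v Hv; rewrite /h; move: Hv; rewrite -root_uniq => /negbTE ->; rewrite big_bool /=; lra.
by rewrite big_bool /h /=; case: b {h E} => /=; ring.
Qed.

Lemma Qd b : Q d b = \sum_(s | root_is s b && leaves_are s x)
   \prod_(u : V) \prod_(v : V | is_child u v) w (s u) (s v).
Proof.
rewrite /Q [RHS]big_mkcond; apply: eq_bigr => s _ /=.
rewrite /Qt [X in _ * X]big_pred0 ?mulr1; last by move=> v /=; rewrite ltnNge dep_le.
rewrite (@prod_forall R _ (fun v : V => tdepth v == 0%N) (fun v => s v == b)).
rewrite [X in _ * X](eq_bigr (fun u : V => (s u == x (val u).2)%:R)); last first.
  by move=> u /eqP H; rewrite /Lv H subnn /=.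
rewrite (@prod_forall R _ (fun v : V => tdepth v == d) (fun v => s v == x (val v).2)).
have Ee : forall u : V, \prod_(v : V | is_child u v && (tdepth v <= d)%N) w (s u) (s v)
   = \prod_(v : V | is_child u v) w (s u) (s v).
  by move=> u; apply: eq_bigl => v; rewrite dep_le andbT.
under eq_bigr => u _ do rewrite Ee.
rewrite /root_is /leaves_are.
by case: [forall _, _]; case: [forall _, _] => /=; ring.
Qed.

Lemma Qstep r b : (r < d)%N -> Q r b = Q r.+1 b.
Proof.
move=> rd.
pose D := fun v : V => tdepth v == r.+1.
pose N := #|{ffun V -> bool}|.
have N0 : (N%:R : R) != 0 by rewrite pnatr_eq0 /N card_ffun card_bool -lt0n expn_gt0.
apply: (mulfI N0).
rewrite /Q -[in RHS](sum_merge D) mulr_sumr.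
pose A (s : {ffun V -> bool}) := (\prod_(v : V | tdepth v == 0%N) (s v == b)%:R) *
  (\prod_(u : V) \prod_(v : V | is_child u v && (tdepth v <= r)%N) w (s u) (s v)) *
  (\prod_(v : V | (r.+1 < tdepth v)%N) (1/2 : R)).
pose g (s : {ffun V -> bool}) (v : V) (c : bool) :=
  if D v then (\prod_(u : V | is_child u v) w (s u) c) * Lv v c else 1.
have E1 : forall s t, Qt r.+1 b (mergeP D s t) = A s * \prod_(v : V) g s v (t v).
  move=> s t; rewrite /Qt /A.
  have mE : forall v, mergeP D s t v = if D v then t v else s v by move=> v; rewrite ffunE.
  have R0 : \prod_(v : V | tdepth v == 0%N) ((mergeP D s t v == b)%:R : R)
          = \prod_(v : V | tdepth v == 0%N) (s v == b)%:R.
    by apply: eq_bigr => v /eqP H; rewrite mE /D H.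
  have Ed : \prod_(u : V) \prod_(v : V | is_child u v && (tdepth v <= r.+1)%N)
               w (mergeP D s t u) (mergeP D s t v)
     = (\prod_(u : V) \prod_(v : V | is_child u v && (tdepth v <= r)%N) w (s u) (s v)) *
       \prod_(u : V) \prod_(v : V | is_child u v && D v) w (s u) (t v).
    rewrite -big_split; apply: eq_bigr => u _.
    rewrite (bigID D) /= mulrC; congr (_ * _).
      apply: eq_big => v.
        by rewrite /D; case: (is_child u v) => //=; apply/idP/idP; lia.
      move=> /andP [/andP [cuv le] nD]; rewrite !mE (negbTE nD).
      have Hu : D u = false by apply/negbTE; rewrite /D; move: le; rewrite (child_dep cuv); lia.
      by rewrite Hu.
    apply: eq_big => v.
      by rewrite /D; case: (is_child u v) => //=; apply/idP/idP; lia.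
    move=> /andP [/andP [cuv _] Dv]; rewrite !mE Dv.
    have Hu : D u = false by apply/negbTE; move: Dv; rewrite /D (child_dep cuv); lia.
    by rewrite Hu.
  have LD : \prod_(u : V | tdepth u == r.+1) Lv u (mergeP D s t u)
          = \prod_(u : V | tdepth u == r.+1) Lv u (t u).
    by apply: eq_bigr => u Du; rewrite mE /D Du.
  have Gp : \prod_(v : V) g s v (t v) =
     (\prod_(u : V) \prod_(v : V | is_child u v && D v) w (s u) (t v)) *
     \prod_(u : V | tdepth u == r.+1) Lv u (t u).
    rewrite /g /= -big_mkcond big_split /=; congr (_ * _).
    rewrite [RHS](exchange_big_dep D) /=; last by move=> u v _ /andP [].
    by apply: eq_bigr => v Dv; apply: eq_bigl => u; rewrite Dv andbT.
  rewrite R0 Ed LD Gp; ring.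

have E2 : forall s, (N%:R * Qt r b s) = A s * \prod_(v : V) \sum_(c : bool) g s v c.
  move=> s; rewrite /Qt /A.
  have H1 : \prod_(v : V | (r < tdepth v)%N) (1/2 : R)
     = (\prod_(v : V | D v) (1/2 : R)) * \prod_(v : V | (r.+1 < tdepth v)%N) (1/2 : R).
    rewrite (bigID D) /=; congr (_ * _); apply: eq_bigl => v; rewrite /D; apply/idP/idP; lia.
  have H2 : \prod_(v : V) \sum_(c : bool) g s v c =
     (\prod_(v : V | D v) \sum_(c : bool) (\prod_(u : V | is_child u v) w (s u) c) * Lv v c)
     * \prod_(v : V | ~~ D v) (2 : R).
    rewrite (bigID D) /=; congr (_ * _); apply: eq_bigr => v Dv; rewrite /g.
      by apply: eq_bigr => c _; rewrite Dv.
    by rewrite (negbTE Dv) big_bool.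
  have H3 : (N%:R : R) = (\prod_(v : V | D v) (2 : R)) * \prod_(v : V | ~~ D v) (2 : R).
    transitivity (\prod_(v : V) (2 : R)); last by rewrite (bigID D).
    by rewrite prodr_const /N card_ffun card_bool natrX.
  have H4 : \prod_(u : V | tdepth u == r) Lv u (s u)
     = \prod_(v : V | D v) \sum_(c : bool) (\prod_(u : V | is_child u v) w (s u) c) * Lv v c.
    rewrite (eq_bigr (fun u => \prod_(v : V | is_child u v) \sum_(c : bool) w (s u) c * Lv v c));
      last by move=> u /eqP Hu; rewrite Lv_rec // Hu.
    rewrite (exchange_big_dep D) /=; last by move=> u v /eqP Hu /child_dep; rewrite /D Hu => ->.
    apply: eq_bigr => v Dv.
    have [pv Hpv] : exists u, is_child u v by apply: parent_ex; rewrite (eqP Dv).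
    have Pe : forall u, is_child u v = (u == pv).
      by move=> u; apply/idP/eqP => [H|->//]; exact: parent_uniq H Hpv.
    rewrite (big_pred1 pv); last first.
      move=> u /=; rewrite Pe; case E: (u == pv); rewrite ?andbF ?andbT // (eqP E).
      by move: Dv; rewrite /D (child_dep Hpv) eqSS.
    by apply: eq_bigr => c _; rewrite (big_pred1 pv) //; exact: Pe.
  have H5 : (\prod_(v : V | D v) (2 : R)) * \prod_(v : V | D v) (1/2 : R) = 1.
    by rewrite -big_split big1 // => v _ /=; lra.
  rewrite H1 H2 H3 H4; move: H5; apply: ring_help.

apply: eq_bigr => s _; rewrite E2.
rewrite (eq_bigr (fun t : {ffun V -> bool} => A s * \prod_(v : V) g s v (t v))); last by move=> t _; apply: E1.
rewrite -mulr_sumr; congr (_ * _).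
by rewrite (@bigA_distr_bigA _ _ _ _ _ _ _ (g s)).
Qed.

Lemma Q_all b r : (r <= d)%N -> Q r b = Q 0 b.
Proof.
elim: r => [//|r IH] le; by rewrite -Qstep ?IH //; apply: ltnW.
Qed.

Lemma root_isE (s : {ffun V -> bool}) b : root_is s b = (s rootv == b).
Proof.
apply/forallP/eqP => [H|H v]; first by move: (H rootv) => /implyP /(_ (eqxx _)) /eqP.
by apply/implyP; rewrite root_uniq => /eqP ->; apply/eqP.
Qed.

Lemma tree_identity :
  cond_root1 theta x = Lv rootv true / (Lv rootv true + Lv rootv false).
Proof.
have P1 : prob_root1_leaves theta x = 1/2 * Q d true.
  rewrite /prob_root1_leaves Qd mulr_sumr; apply: eq_bigr => s _; by rewrite /label_prob.
have P2 : prob_leaves theta x = 1/2 * (Q d true + Q d false).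
  rewrite /prob_leaves !Qd (big_mkcond (fun s => root_is s true && _)).
  rewrite (big_mkcond (fun s => root_is s false && _)) -big_split mulr_sumr /=.
  rewrite big_mkcond; apply: eq_bigr => s _ /=.
  rewrite !root_isE /label_prob.
  by case: (leaves_are s x); case: (s rootv) => /=; ring.
rewrite /cond_root1 P1 P2 !Q_all // !Q0 invfM mulrACA divff ?mul1r //.
lra.
Qed.

End Tree.


Definition agree (a b : option bool) : option bool :=
  match a, b with Some x, Some y => if x == y then Some x else None | _, _ => None end.
Definition sel (a b : option bool) : option bool := if a is Some _ then a else b.

Section Rand.
Variables (R : realType) (theta : R) (n : nat).
Hypothesis th : -1 < theta < 1.
Local Notation X := {ffun 'I_n -> bool}.
Local Notation Fn := {ffun X -> option bool}.
Local Notation Dist := {ffun Fn -> R}.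

Definition marg (P : Dist) (y : X) (a : option bool) : R := \sum_(F : Fn | F y == a) P F.
Definition nonneg (P : Dist) := forall F, 0 <= P F.
Definition dirac (f : Fn) : Dist := [ffun F => (F == f)%:R].
Definition lift2 (op : option bool -> option bool -> option bool) (F G : Fn) : Fn :=
  [ffun y => op (F y) (G y)].
Definition comb op (P Q : Dist) : Dist :=
  [ffun H => \sum_(F : Fn) \sum_(G : Fn) (H == lift2 op F G)%:R * (P F * Q G)].
Definition negF (F : Fn) : Fn := [ffun y => omap negb (F y)].
Definition noise (P : Dist) : Dist :=
  [ffun H => (1 + theta) / 2 * P H + (1 - theta) / 2 * P (negF H)].

Lemma distr_nonneg (P : Dist) : is_distr P -> nonneg P.
Proof. by case. Qed.

Lemma marg_part (P : Dist) y (phi : option bool -> R) :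
  \sum_(F : Fn) P F * phi (F y) = \sum_(a : option bool) phi a * marg P y a.
Proof.
rewrite (partition_big (fun F : Fn => F y) xpredT) //=.
apply: eq_bigr => a _; rewrite /marg mulr_sumr; apply: eq_bigr => F /eqP ->.
by rewrite mulrC.
Qed.

Lemma marg_total (P : Dist) y :
  \sum_(F : Fn) P F = marg P y None + marg P y (Some true) + marg P y (Some false).
Proof.
rewrite -sum_optb; have := marg_part P y (fun _ => 1).
by under eq_bigr do rewrite mulr1; under [in RHS]eq_bigr do rewrite mul1r.
Qed.

Lemma marg_ge0 (P : Dist) y a : nonneg P -> 0 <= marg P y a.
Proof. by move=> h; apply: sumr_ge0. Qed.

Lemma sum_ind (z : Fn) (Pr : pred Fn) (v : R) :
  \sum_(H : Fn | Pr H) (H == z)%:R * v = (Pr z)%:R * v.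
Proof.
case E: (Pr z).
  rewrite (bigD1 z) //= eqxx big1 ?addr0 // => H /andP [_ /negbTE ->]; by rewrite mul0r.
by rewrite big1 ?mul0r // => H PH; case: eqP PH => [->|]; rewrite ?E ?mul0r.
Qed.

Lemma dirac_distr f : is_distr (dirac f).
Proof.
split; first by move=> F; rewrite ffunE ler0n.
rewrite (bigD1 f) //= ffunE eqxx big1 ?addr0 // => H /negbTE; rewrite ffunE => ->//.
Qed.

Lemma dirac_marg f y a : marg (dirac f) y a = (f y == a)%:R.
Proof.
rewrite /marg (eq_bigr (fun F => (F == f)%:R * 1)); last by move=> F _; rewrite ffunE mulr1.
by rewrite sum_ind mulr1.
Qed.

Lemma comb_distr op P Q : is_distr P -> is_distr Q -> is_distr (comb op P Q).
Proof.
move=> [P0 P1] [Q0 Q1]; split.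
  move=> H; rewrite ffunE; apply: sumr_ge0 => F _; apply: sumr_ge0 => G _.
  by apply: mulr_ge0; [apply: ler0n | apply: mulr_ge0].
under eq_bigr do rewrite ffunE.
rewrite exchange_big /=; under eq_bigr do rewrite exchange_big /=.
under eq_bigr do under eq_bigr do rewrite (sum_ind _ xpredT) /= mul1r.
rewrite (eq_bigr (fun F => P F * \sum_(G : Fn) Q G)); last by move=> F _; rewrite mulr_sumr.
by rewrite Q1; under eq_bigr do rewrite mulr1.
Qed.

Lemma comb_marg op P Q y c : marg (comb op P Q) y c =
  \sum_(a : option bool) \sum_(b : option bool) (op a b == c)%:R * (marg P y a * marg Q y b).
Proof.
rewrite /marg; under eq_bigr do rewrite ffunE.
rewrite exchange_big /=; under eq_bigr do rewrite exchange_big /=.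
under eq_bigr do under eq_bigr do rewrite (sum_ind _ (fun H : Fn => H y == c)) /= ffunE.
rewrite (eq_bigr (fun F => P F * (\sum_(b : option bool) (op (F y) b == c)%:R * marg Q y b))); last first.
  move=> F _; rewrite -(marg_part Q y (fun b => (op (F y) b == c)%:R)) mulr_sumr.
  by apply: eq_bigr => G _; ring.
rewrite (marg_part P y (fun a => \sum_(b : option bool) (op a b == c)%:R * marg Q y b)).
apply: eq_bigr => a _; rewrite mulr_suml; apply: eq_bigr => b _; rewrite /marg; ring.
Qed.

Lemma comb_supp op P Q H : nonneg P -> nonneg Q -> 0 < comb op P Q H ->
  exists F G, [/\ 0 < P F, 0 < Q G & H = lift2 op F G].
Proof.
move=> P0 Q0; rewrite ffunE => pos.
have [F /andP [_ hF]] := psumr_neq0P (fun F _ => sumr_ge0 _ (fun G _ => mulr_ge0 (ler0n _ _) (mulr_ge0 (P0 F) (Q0 G)))) (elimN eqP (lt0r_neq0 pos)).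
have [G /andP [_ hG]] := psumr_neq0P (fun G _ => mulr_ge0 (ler0n _ _) (mulr_ge0 (P0 F) (Q0 G))) (elimN eqP (lt0r_neq0 hF)).
exists F, G; case E: (H == lift2 op F G) hG; last by rewrite mul0r ltxx.
rewrite mul1r => hG; split; last exact/eqP.
  by rewrite lt0r (P0 F) andbT; apply: contraTneq hG => ->; rewrite mul0r ltxx.
by rewrite lt0r (Q0 G) andbT; apply: contraTneq hG => ->; rewrite mulr0 ltxx.
Qed.

Lemma negF_inv : involutive negF.
Proof. by move=> H; apply/ffunP => y; rewrite !ffunE; case: (H y) => [[]|]. Qed.

Lemma negF_inj : injective negF.
Proof. exact: inv_inj negF_inv. Qed.

Lemma sum_negF (P : Dist) (Pr : pred Fn) :
  \sum_(H : Fn | Pr H) P (negF H) = \sum_(H : Fn | Pr (negF H)) P H.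
Proof. by rewrite (reindex_inj negF_inj) /=; apply: eq_bigr => H _; rewrite negF_inv. Qed.

Lemma noise_distr P : is_distr P -> is_distr (noise P).
Proof.
move: th => /andP [t1 t2]; case=> P0 P1; split.
  move=> H; rewrite ffunE; apply: addr_ge0; apply: mulr_ge0 => //; lra.
under eq_bigr do rewrite ffunE.
rewrite big_split /= -!mulr_sumr (sum_negF P xpredT) P1; lra.
Qed.

Lemma noise_marg P y a : marg (noise P) y a =
  (1 + theta) / 2 * marg P y a + (1 - theta) / 2 * marg P y (omap negb a).
Proof.
rewrite /marg; under eq_bigr do rewrite ffunE.
rewrite big_split /= -!mulr_sumr sum_negF; congr (_ + _ * _).
apply: eq_bigl => H; rewrite ffunE; by case: (H y) a => [[]|] [[]|].
Qed.

Lemma noise_supp P H : nonneg P -> 0 < noise P H -> 0 < P H \/ 0 < P (negF H).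
Proof.
move: th => /andP [t1 t2] P0; rewrite ffunE => pos.
have [h1|h1] := ltrP 0 (P H); first by left.
have [h2|h2] := ltrP 0 (P (negF H)); first by right.
have e1 : P H = 0 by apply/le_anti; rewrite h1 P0.
have e2 : P (negF H) = 0 by apply/le_anti; rewrite h2 P0.
by move: pos; rewrite e1 e2 !mulr0 addr0 ltxx.
Qed.

Definition suppD (P : Dist) (D : nat) := forall F, 0 < P F -> computable_depth F D.
Definition psucc (P : Dist) y := marg P y (Some true) + marg P y (Some false).

Lemma comp_mono (F : Fn) D D' :
  computable_depth F D -> (D <= D')%N -> computable_depth F D'.
Proof.
move=> [c1 [c2 [h1 h2 e]]] le; exists c1, c2; split => //; exact: leq_trans le.
Qed.

Lemma comp_neg (F : Fn) D : computable_depth F D -> computable_depth (negF F) D.+1.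
Proof.
move=> [c1 [c2 [h1 h2 e]]]; exists (CNot c1), (CNot c2); split => //= y.
by rewrite ffunE e /decode3 /=; case: (ceval c1 y); case: (ceval c2 y).
Qed.

Lemma comp_agree (F G : Fn) D1 D2 : computable_depth F D1 -> computable_depth G D2 ->
  computable_depth (lift2 agree F G) (maxn D1 D2 + 2).
Proof.
move=> [c1 [c2 [h1 h2 e1]]] [c3 [c4 [h3 h4 e2]]].
exists (CAnd (CAnd c1 c2) (CAnd c3 c4)), (COr (COr c1 c2) (COr c3 c4)); split => /=; try lia.
move=> y; rewrite ffunE e1 e2 /decode3 /=.
by case: (ceval c1 y); case: (ceval c2 y); case: (ceval c3 y); case: (ceval c4 y).
Qed.

Lemma comp_sel (F G : Fn) D1 D2 : computable_depth F D1 -> computable_depth G D2 ->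
  computable_depth (lift2 sel F G) (maxn D1 D2 + 5).
Proof.
move=> [p [q [h1 h2 e1]]] [r [s [h3 h4 e2]]].
pose ne := CAnd (COr p q) (CNot (CAnd p q)).
exists (COr (CAnd p q) (CAnd ne r)), (COr (CAnd p q) (CAnd ne s)); split => /=; try lia.
move=> y; rewrite ffunE e1 e2 /decode3 /=.
by case: (ceval p y); case: (ceval q y); case: (ceval r y); case: (ceval s y).
Qed.

Lemma noise_suppD P D : nonneg P -> suppD P D -> suppD (noise P) D.+1.
Proof.
move=> P0 hP H /(noise_supp P0) [h|h].
  by apply: comp_mono (hP _ h) _.
by rewrite -[H]negF_inv; apply: comp_neg; apply: hP.
Qed.

Lemma comb_suppA P Q D1 D2 : nonneg P -> nonneg Q -> suppD P D1 -> suppD Q D2 ->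
  suppD (comb agree P Q) (maxn D1 D2 + 2).
Proof.
move=> P0 Q0 hP hQ H /(comb_supp P0 Q0) [F [G [pF pG ->]]].
by apply: comp_agree; [apply: hP | apply: hQ].
Qed.

Lemma comb_suppS P Q D1 D2 : nonneg P -> nonneg Q -> suppD P D1 -> suppD Q D2 ->
  suppD (comb sel P Q) (maxn D1 D2 + 5).
Proof.
move=> P0 Q0 hP hQ H /(comb_supp P0 Q0) [F [G [pF pG ->]]].
by apply: comp_sel; [apply: hP | apply: hQ].
Qed.

Lemma agree_sum (f g : option bool -> R) b :
  \sum_(a : option bool) \sum_(c : option bool) (agree a c == Some b)%:R * (f a * g c)
  = f (Some b) * g (Some b).
Proof. by rewrite !sum_optb; case: b => /=; ring. Qed.

Lemma sel_sum (f g : option bool -> R) b :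
  \sum_(a : option bool) \sum_(c : option bool) (sel a c == Some b)%:R * (f a * g c)
  = f (Some b) * (g None + g (Some true) + g (Some false)) + f None * g (Some b).
Proof. by rewrite !sum_optb; case: b => /=; ring. Qed.

Lemma noise_margS P y b : marg (noise P) y (Some b) =
  \sum_(c : bool) edge_w theta b c * marg P y (Some c).
Proof. rewrite noise_marg big_bool /edge_w; case: b => /=; ring. Qed.

Definition round (P : Dist) (l : seq Dist) : Dist :=
  foldr (fun Q acc => comb agree (noise Q) acc) (noise P) l.

Fixpoint rep (m : nat) (G : Dist) : Dist :=
  match m with 0 => G | m.+1 => comb sel G (rep m G) end.

Lemma round_distr P l : is_distr P -> (forall Q, Q \in l -> is_distr Q) -> is_distr (round P l).
Proof.
move=> hP; elim: l => [|Q l IH] hl /=; first exact: noise_distr.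
apply: comb_distr; first by apply: noise_distr; apply: hl; rewrite inE eqxx.
by apply: IH => Q' h; apply: hl; rewrite inE h orbT.
Qed.

Lemma round_supp P l D : is_distr P -> suppD P D ->
  (forall Q, Q \in l -> is_distr Q /\ suppD Q D) -> suppD (round P l) (D + 1 + 2 * size l).
Proof.
move=> hP sP; elim: l => [|Q l IH] hl /=.
  by rewrite addn0 addn1; apply: noise_suppD => //; apply: distr_nonneg.
have [dQ sQ] := hl Q (mem_head _ _).
have hl' : forall Q', Q' \in l -> is_distr Q' /\ suppD Q' D.
  by move=> Q' h; apply: hl; rewrite inE h orbT.
have dl := round_distr hP (fun Q' h => (hl' Q' h).1).
move=> H hH.
have := comb_suppA (distr_nonneg (noise_distr dQ)) (distr_nonneg dl)
  (noise_suppD (distr_nonneg dQ) sQ) (IH hl') hH.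
move=> c; apply: comp_mono c _; set z := size l; lia.
Qed.

Lemma round_marg P l y b : marg (round P l) y (Some b) =
  marg (noise P) y (Some b) * \prod_(Q <- l) marg (noise Q) y (Some b).
Proof.
elim: l => [|Q l IH] /=; first by rewrite big_nil mulr1.
by rewrite comb_marg agree_sum IH big_cons; ring.
Qed.

Lemma rep_distr m G : is_distr G -> is_distr (rep m G).
Proof. by move=> hG; elim: m => [|m IH] //=; apply: comb_distr. Qed.

Lemma rep_supp m G D : is_distr G -> suppD G D -> suppD (rep m G) (D + 5 * m).
Proof.
move=> hG sG; elim: m => [|m IH] /=; first by rewrite addn0.
move=> H hH.
have := comb_suppS (distr_nonneg hG) (distr_nonneg (rep_distr m hG)) sG IH hH.
move=> c; apply: comp_mono c _; lia.
Qed.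

Lemma rep_margS m G y b : is_distr G -> marg (rep m.+1 G) y (Some b) =
  marg G y (Some b) + (1 - psucc G y) * marg (rep m G) y (Some b).
Proof.
move=> hG; rewrite /= comb_marg sel_sum -marg_total.
have [_ ->] := rep_distr m hG.
have [_ e] := hG; move: e; rewrite (marg_total _ y) /psucc => e.
have -> : marg G y None = 1 - (marg G y (Some true) + marg G y (Some false)) by rewrite -e; ring.
ring.
Qed.

Lemma rep_prop m G y (L : bool -> R) gam : is_distr G ->
  (forall b, marg G y (Some b) = gam * L b) ->
  exists beta, forall b, marg (rep m G) y (Some b) = beta * L b.
Proof.
move=> hG hL; elim: m => [|m [beta IH]]; first by exists gam.
exists (gam + (1 - psucc G y) * beta) => b.
by rewrite rep_margS // IH hL; ring.
Qed.

Lemma rep_succ m G y : is_distr G -> 1 - psucc (rep m G) y = (1 - psucc G y) ^+ m.+1.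
Proof.
move=> hG; elim: m => [|m IH]; first by rewrite expr1.
rewrite exprS -IH {1}/psucc !rep_margS // /psucc; ring.
Qed.

End Rand.


Lemma prod_prop (R : realType) (I : eqType) (l : seq I) (g h : I -> bool -> R) :
  (forall i, i \in l -> exists beta, forall b, g i b = beta * h i b) ->
  exists beta, forall b, \prod_(i <- l) g i b = beta * \prod_(i <- l) h i b.
Proof.
elim: l => [|i l IH] hl; first by exists 1 => b; rewrite !big_nil mul1r.
have [b1 e1] := hl i (mem_head _ _).
have [b2 e2] : exists beta, forall b, \prod_(i <- l) g i b = beta * \prod_(i <- l) h i b.
  by apply: IH => j hj; apply: hl; rewrite inE hj orbT.
by exists (b1 * b2) => b; rewrite !big_cons e1 e2; ring.
Qed.

Lemma prod_lb (R : realType) (I : eqType) (l : seq I) (f : I -> R) (c : R) :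
  0 <= c -> (forall i, i \in l -> c <= f i) -> c ^+ size l <= \prod_(i <- l) f i.
Proof.
move=> c0; elim: l => [|i l IH] hl; first by rewrite big_nil expr0.
rewrite big_cons /= exprS; apply: ler_pM => //; first exact: exprn_ge0.
  by apply: hl; rewrite inE eqxx.
by apply: IH => j hj; apply: hl; rewrite inE hj orbT.
Qed.

Lemma bernoulli (R : realType) (q : R) (N : nat) : 0 <= q <= 1 ->
  (1 + N%:R * q) * (1 - q) ^+ N <= 1.
Proof.
move=> /andP [q0 q1]; elim: N => [|N IH]; first by rewrite expr0 mul0r addr0 mulr1.
have t0 : 0 <= (1 - q) ^+ N by apply: exprn_ge0; lra.
have n0 : 0 <= (N%:R : R) by apply: ler0n.
have h : (1 + N.+1%:R * q) * (1 - q) <= 1 + N%:R * q by rewrite -addn1 natrD; nra.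
rewrite exprS mulrA; apply: le_trans IH; exact: ler_wpM2r.
Qed.

Lemma sum_notNone (R : realType) n (P : {ffun {ffun {ffun 'I_n -> bool} -> option bool} -> R}) y :
  \sum_(F : {ffun {ffun 'I_n -> bool} -> option bool} | F y != None) P F = psucc P y.
Proof.
rewrite big_mkcond /=.
rewrite (eq_bigr (fun F => P F * (F y != None)%:R)); last by move=> F _; case: (F y != None); rewrite ?mulr1 ?mulr0.
by rewrite (marg_part P y (fun a => (a != None)%:R)) sum_optb /psucc /=; ring.
Qed.

Section Main.
Variables (R : realType) (theta : R) (k m d : nat).
Hypothesis th : -1 < theta < 1.
Hypothesis kpos : (0 < k)%N.
Local Notation V := (tvert k d).
Local Notation Fn := {ffun {ffun 'I_(k ^ d) -> bool} -> option bool}.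
Local Notation Dist := {ffun Fn -> R}.

Definition sK : R := 1 - 1 / (2 * k%:R).
Definition mu : R := (1 - theta) * (1 + theta) / 4.
Definition q0 : R := (mu * sK) ^+ k.
Hypothesis mbig : (1 - q0) ^+ m.+1 <= 1 / (2 * k%:R).
Definition cst : nat := (2 * k + 5 * m + 1)%N.

Definition leafF (v : V) : Fn := [ffun y : {ffun 'I_(k ^ d) -> bool} => Some (y (val v).2)].

Fixpoint Pfix (j : nat) (v : V) : Dist :=
  match j with
  | 0 => dirac R (leafF v)
  | j.+1 => match enum [pred u | is_child v u] with
            | [::] => dirac R (leafF v)
            | u :: us => rep m (round theta (Pfix j u) [seq Pfix j u' | u' <- us])
            end
  end.

Lemma sK_bounds : 1/2 <= sK <= 1.
Proof.
have k1 : (1 <= k%:R :> R) by rewrite ler1n.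
have p : 0 < 2 * (k%:R : R) by lra.
have h1 : 1 / (2 * k%:R) <= (1/2 : R) by rewrite ler_pdivrMr //; lra.
have h2 : 0 <= 1 / (2 * k%:R :> R) by apply: divr_ge0 => //; lra.
rewrite /sK; move: h1 h2; set t := 1 / _ => h1 h2; apply/andP; split; lra.
Qed.

Lemma mu_bounds : [/\ 0 < mu, mu <= (1 + theta) / 2 & mu <= (1 - theta) / 2].
Proof. move: th => /andP [t1 t2]; rewrite /mu; split; nra. Qed.

Lemma Pfix_inv j : forall v : V, (tdepth v + j = d)%N ->
  [/\ is_distr (Pfix j v), suppD (Pfix j v) (cst * j),
      forall y, exists beta, forall b, marg (Pfix j v) y (Some b) = beta * Lfix theta y j v b
    & forall y, sK <= psucc (Pfix j v) y].
Proof.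
have [s1 s2] : 1/2 <= sK /\ sK <= 1 by apply/andP; apply: sK_bounds.
elim: j => [|j IH] v hv /=.
  split.
  - exact: dirac_distr.
  - move=> F; rewrite ffunE; case E: (F == leafF v); last by rewrite ltxx.
    move=> _; rewrite (eqP E) muln0; exists (CInp (val v).2), (CInp (val v).2).
    by split => // y; rewrite ffunE /decode3 eqxx.
  - by move=> y; exists 1 => b; rewrite dirac_marg mul1r ffunE eq_sym.
  - move=> y; rewrite /psucc !dirac_marg ffunE.
    by case: (y (val v).2) => /=; lra.
have dlt : (tdepth v < d)%N by lia.
have [u0 hu0] := child_ex kpos dlt.
case E: (enum _) => [|u us].
  by have := mem_enum [pred u | is_child v u] u0; rewrite E inE hu0.
have memc : forall u', u' \in u :: us -> is_child v u'.
  by move=> u'; rewrite -E mem_enum inE.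
have IHc : forall u', u' \in u :: us -> [/\ is_distr (Pfix j u'), suppD (Pfix j u') (cst * j),
      forall y, exists beta, forall b, marg (Pfix j u') y (Some b) = beta * Lfix theta y j u' b
    & forall y, sK <= psucc (Pfix j u') y].
  move=> u' hu'; apply: IH; have := child_dep (memc u' hu'); lia.
have sz : (size (u :: us) <= k)%N by rewrite -E -cardE card_children.
pose G := round theta (Pfix j u) [seq Pfix j u' | u' <- us].
have hmap : forall Q, Q \in [seq Pfix j u' | u' <- us] -> is_distr Q /\ suppD Q (cst * j).
  move=> Q /mapP [u' hu' ->]; have [] := IHc u'; first by rewrite inE hu' orbT.
  by move=> a b _ _.
have [du su _ _] := IHc u (mem_head _ _).
have dG : is_distr G by apply: round_distr => // Q /hmap [].
have margG : forall y b, marg G y (Some b) =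
    \prod_(u' <- u :: us) marg (noise theta (Pfix j u')) y (Some b).
  by move=> y b; rewrite round_marg big_cons big_map.
split.
- exact: rep_distr.
- move=> F hF.
  have := rep_supp th dG (round_supp th du su hmap) hF.
  move=> c; apply: comp_mono c _; rewrite size_map /cst mulnSr.
  move: sz => /=; set z := size us; lia.
- move=> y.
  have [gam hg] : exists gam, forall b, marg G y (Some b) = gam * Lfix theta y j.+1 v b.
    have hyp : forall u', u' \in u :: us -> exists beta, forall b,
        marg (noise theta (Pfix j u')) y (Some b) =
        beta * \sum_(c : bool) edge_w theta b c * Lfix theta y j u' c.
      move=> u' hu'; have [_ _ hp _] := IHc u' hu'; have [beta hb] := hp y.
      by exists beta => b; rewrite noise_margS mulr_sumr; apply: eq_bigr => c _; rewrite hb; ring.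
    have [gam hg] := prod_prop hyp.
    exists gam => b; rewrite margG hg /=; congr (_ * _).
    by rewrite -E big_enum; apply: eq_bigl => w; rewrite inE.
  exact: rep_prop dG hg.
- move=> y.
  have [mu0 mu1 mu2] := mu_bounds.
  have lb : q0 <= psucc G y.
    have m0 : 0 <= marg G y (Some false) by apply: marg_ge0; apply: distr_nonneg.
    apply: (@le_trans _ _ (marg G y (Some true))); last by rewrite /psucc; lra.
    rewrite margG; apply: (@le_trans _ _ ((mu * sK) ^+ size (u :: us))).
      by rewrite /q0; apply: ler_wiXn2l => //; nra.
    apply: prod_lb; first by nra.
    move=> u' hu'; have [du' _ _ hs] := IHc u' hu'.
    have a0 := marg_ge0 y (Some true) (distr_nonneg du').
    have b0 := marg_ge0 y (Some false) (distr_nonneg du').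
    have := hs y; rewrite noise_marg /psucc /= => hs'.
    nra.
  have ub : psucc G y <= 1.
    have [_ e] := dG; move: e; rewrite (marg_total _ y) /psucc => e.
    have := marg_ge0 y None (distr_nonneg dG); lra.
  have := rep_succ m y dG => e.
  have q00 : 0 <= q0 by rewrite /q0; apply: exprn_ge0; nra.
  have : (1 - psucc G y) ^+ m.+1 <= (1 - q0) ^+ m.+1.
    by apply: lerXn2r; rewrite ?nnegrE; lra.
  move=> hp; suff : sK <= psucc (rep m G) y by []; rewrite /sK.
  have -> : psucc (rep m G) y = 1 - (1 - psucc G y) ^+ m.+1 by rewrite -e; ring.
  by rewrite lerD2l lerN2; exact: le_trans hp mbig.
Qed.

End Main.

Unset Implicit Arguments.
Set Strict Implicit.

Theorem mainTheorem19 (R : realType) (theta : R) (k : nat) :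
  -1 < theta < 1 -> (0 < k)%N ->
  exists h : R, 0 < h /\
  forall d : nat,
  exists PF : {ffun {ffun {ffun 'I_(k ^ d) -> bool} -> option bool} -> R},
    [/\ is_distr PF,
        (forall F, 0 < PF F -> exists D : nat,
             (D%:R <= h * d%:R) /\ computable_depth F D),
        (forall x : {ffun 'I_(k ^ d) -> bool},
           \sum_(F : {ffun {ffun 'I_(k ^ d) -> bool} -> option bool} | F x != None) PF F >= 1 - 1 / (2 * k%:R)) &
        (forall x : {ffun 'I_(k ^ d) -> bool},
           (\sum_(F : {ffun {ffun 'I_(k ^ d) -> bool} -> option bool} | F x == Some true) PF F) / (\sum_(F : {ffun {ffun 'I_(k ^ d) -> bool} -> option bool} | F x != None) PF F)
           = cond_root1 theta x)].
Proof.
move=> th kpos.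
have [s1 s2] : 1/2 <= sK R k /\ sK R k <= 1 by apply/andP; apply: sK_bounds.
have [mu0 mu1 mu2] := mu_bounds th.
have mu4 : mu theta <= 1/4 by move: th => /andP [t1 t2]; rewrite /mu; nra.
have qpos : 0 < q0 theta k by rewrite /q0; apply: exprn_gt0; nra.
have q1 : q0 theta k <= 1 by rewrite /q0; apply: exprn_ile1; nra.
have k1 : (1 <= k%:R :> R) by rewrite ler1n.
pose M := Num.Def.archi_bound (2 * k%:R / q0 theta k).
have mbig : (1 - q0 theta k) ^+ M.+1 <= 1 / (2 * k%:R).
  have hb := bernoulli M.+1 (q := q0 theta k) (ltac:(apply/andP; split; lra)).
  have hM : 2 * k%:R / q0 theta k < M%:R.
    by apply: archi_boundP; apply: divr_ge0; lra.
  have hM' : 2 * k%:R < M%:R * q0 theta k by rewrite -ltr_pdivrMr.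
  have t0 : 0 <= (1 - q0 theta k) ^+ M.+1 by apply: exprn_ge0; lra.
  rewrite ler_pdivlMr; last by lra.
  have eM : (M.+1%:R : R) = M%:R + 1 by rewrite -addn1 natrD.
  rewrite eM in hb.
  have h1 := ler_wpM2l t0 (ltW hM').
  have tq : 0 <= (1 - q0 theta k) ^+ M.+1 * q0 theta k by apply: mulr_ge0; lra.
  move: hb h1 tq; set t := _ ^+ _; set q := q0 theta k; move=> hb h1 tq; nra.
exists (cst k M)%:R; split; first by rewrite ltr0n /cst addn1.
move=> d.
have kdpos : (0 < k ^ d)%N by rewrite expn_gt0 kpos.
have [hd hs hp hsucc] := Pfix_inv th kpos mbig (j := d) (v := rootv kdpos) (erefl).
exists (Pfix theta M d (rootv kdpos)); split.
- exact: hd.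
- by move=> F hF; exists (cst k M * d)%N; split; [rewrite natrM | exact: hs].
- by move=> x; rewrite sum_notNone; exact: hsucc.
move=> x; rewrite sum_notNone (tree_identity theta kpos kdpos).
have [beta hb] := hp x.
have -> : \sum_(F : {ffun {ffun 'I_(k ^ d) -> bool} -> option bool} | F x == Some true)
    Pfix theta M d (rootv kdpos) F = marg (Pfix theta M d (rootv kdpos)) x (Some true) by [].
have hs' := hsucc x.
rewrite /psucc !hb /Lv /= subn0 in hs' *.
have b0 : beta != 0 by apply: contraTneq hs' => ->; rewrite !mul0r addr0; lra.
by rewrite -mulrDr invfM mulrACA divff // mul1r.
Qed.
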